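(* Let $m,n$ be positive integers, $a=\min(m,n)$ and $b=\max(m,n)$. Then $J(\mathbf{P}_{m,n})$, ordered by inclusion, is a distributive lattice of rank $\frac{-a^3+3a^2b+3ab+a}{6}$.
   Context: The poset $\mathbf{P}_{m,n}$ has elements the integer triples $(i,j,k)$ with $0\le k\le m-1$, $k\le j\le n-1$, $k\le i\le m-1$, and partial order generated by the covering relations: $(i,j,k)$ covers each of $(i+1,j,k)$, $(i,j+1,k)$, $(i-1,j,k-1)$, $(i,j-1,k-1)$ that is an element of $\mathbf{P}_{m,n}$. For a poset $P$, $J(P)$ denotes the set of order ideals of $P$ (subsets $X$ with $y\in X,\ z\le y\Rightarrow z\in X$). *)

(* Defs.v *)
From mathcomp Require Import all_boot.
Set Implicit Arguments. Unset Strict Implicit. Unset Printing Implicit Defensive.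

(* Elements of P_{m,n}: triples (i,j,k) with 0<=k<=m-1, k<=j<=n-1, k<=i<=m-1.
   Coordinates: t.1.1 = i : 'I_m, t.1.2 = j : 'I_n, t.2 = k : 'I_m. *)
Definition Pcond (m n : nat) (t : 'I_m * 'I_n * 'I_m) : bool :=
  (t.2 <= t.1.2) && (t.2 <= t.1.1).

Definition Pelt (m n : nat) := {t : 'I_m * 'I_n * 'I_m | Pcond t}.

Definition pi (m n : nat) (x : Pelt m n) : nat := (val x).1.1.
Definition pj (m n : nat) (x : Pelt m n) : nat := (val x).1.2.
Definition pk (m n : nat) (x : Pelt m n) : nat := (val x).2.

Definition covers (m n : nat) (x y : Pelt m n) : bool :=
  [|| [&& pi y == (pi x).+1, pj y == pj x & pk y == pk x],
      [&& pi y == pi x, pj y == (pj x).+1 & pk y == pk x],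
      [&& 0 < pk x, pi y == (pi x).-1, pj y == pj x & pk y == (pk x).-1]
    | [&& 0 < pk x, pi y == pi x, pj y == (pj x).-1 & pk y == (pk x).-1]].

Definition Ple (m n : nat) (y x : Pelt m n) : bool :=
  connect (fun z z' : Pelt m n => covers z' z) y x.

Definition is_ideal (m n : nat) (X : {set Pelt m n}) : Prop :=
  forall y z : Pelt m n, y \in X -> Ple z y -> z \in X.

Definition is_chain (m n : nat) (C : {set {set Pelt m n}}) : Prop :=
  (forall X, X \in C -> is_ideal X) /\
  (forall X Y, X \in C -> Y \in C -> (X \subset Y) || (Y \subset X)).

Definition is_maximal_chain (m n : nat) (C : {set {set Pelt m n}}) : Prop :=
  is_chain C /\ (forall D, is_chain D -> C \subset D -> D = C).

(* Main.v *)
Require Import Defs.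
From mathcomp Require Import all_boot zify.
From Stdlib Require Import Classical.

Section Rank.
Variables m n : nat.
Definition rk (t : Pelt m n) : nat := 2 * pk t + (m - Defs.pi t) + (n - pj t).

Lemma bounds (t : Pelt m n) : [/\ Defs.pi t < m, pj t < n, pk t <= pj t & pk t <= Defs.pi t].
Proof.
case: t => [[[i j] k] h]; rewrite /Defs.pi /pj /pk /=.
by case/andP: h => h1 h2; split.
Qed.

Lemma cover_rank x y : covers x y -> rk x = (rk y).+1.
Proof.
rewrite /covers /rk; case: (bounds x) => a1 a2 a3 a4; case: (bounds y) => b1 b2 b3 b4.
case/or4P.
- case/and3P => /eqP e1 /eqP e2 /eqP e3; lia.
- case/and3P => /eqP e1 /eqP e2 /eqP e3; lia.
- case/and4P => e0 /eqP e1 /eqP e2 /eqP e3; lia.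
- case/and4P => e0 /eqP e1 /eqP e2 /eqP e3; lia.
Qed.

Lemma path_rank x p : path (fun z z' : Pelt m n => covers z' z) x p ->
  rk (last x p) = rk x + size p.
Proof.
elim: p x => [|y p IH] x /=; first by rewrite addn0.
case/andP => /cover_rank h /IH ->; rewrite h; lia.
Qed.

Lemma Ple_rank (y x : Pelt m n) : Ple y x -> exists s, rk x = rk y + s /\ (s = 0 -> x = y).
Proof.
case/connectP => p hp ->; exists (size p); split; first exact: path_rank.
by case: p hp.
Qed.

Lemma Ple_anti (x y : Pelt m n) : Ple x y -> Ple y x -> x = y.
Proof.
move=> /Ple_rank [s1 [h1 e1]] /Ple_rank [s2 [h2 e2]].
by rewrite e1 //; lia.
Qed.

Notation T := (Pelt m n).

Lemma ideal0 : is_ideal (set0 : {set T}).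
Proof. by move=> y z; rewrite in_set0. Qed.
Lemma idealT : is_ideal [set: T].
Proof. by move=> y z; rewrite !in_setT. Qed.

Lemma step (X Y : {set T}) : is_ideal X -> is_ideal Y -> X \proper Y ->
  exists z, [/\ z \in Y, z \notin X & is_ideal (z |: X)].
Proof.
move=> iX iY /properP [sXY [z0 z0Y z0X]].
have P0 : z0 \in Y :\: X by rewrite inE z0Y z0X.
case: (arg_minnP (fun t : T => rk t) P0) => z hz zmin.
have /setDP [zY zX] : z \in Y :\: X := hz.
exists z; split => // y w; rewrite in_setU1 => /orP [/eqP -> | yX] hw; last first.
  by rewrite in_setU1 (iX y w yX hw) orbT.
rewrite in_setU1; case: (boolP (w \in X)) => wX; first by rewrite orbT.
have wY : w \in Y := iY z w zY hw.
have wD : w \in Y :\: X by rewrite inE wX wY.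
have le := zmin w wD.
case: (Ple_rank _ _ hw) => s [e1 e2].
by rewrite (e2 _) ?eqxx //; lia.
Qed.

Lemma maxchain_set0 (C : {set {set T}}) : is_maximal_chain C -> set0 \in C.
Proof.
case=> [[ci cc] mx].
have : set0 |: C = C.
  apply: mx; last exact: subsetUr.
  split.
    by move=> X; rewrite in_setU1 => /orP [/eqP -> | /ci //]; exact: ideal0.
  move=> X Y; rewrite !in_setU1 => /orP [/eqP -> | XC] /orP [/eqP -> | YC].
  - by rewrite sub0set.
  - by rewrite sub0set.
  - by rewrite sub0set orbT.
  - exact: cc.
by move=> <-; rewrite setU11.
Qed.

Lemma maxchain_setT (C : {set {set T}}) : is_maximal_chain C -> setT \in C.
Proof.
case=> [[ci cc] mx].
have : setT |: C = C.
  apply: mx; last exact: subsetUr.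
  split.
    by move=> X; rewrite in_setU1 => /orP [/eqP -> | /ci //]; exact: idealT.
  move=> X Y; rewrite !in_setU1 => /orP [/eqP -> | XC] /orP [/eqP -> | YC].
  - by rewrite subsetT.
  - by rewrite subsetT orbT.
  - by rewrite subsetT.
  - exact: cc.
by move=> <-; rewrite setU11.
Qed.

Lemma maxchain_all (C : {set {set T}}) : is_maximal_chain C ->
  forall k, k <= #|{: T}| -> exists2 X, X \in C & #|X| = k.
Proof.
move=> hC; have [[ci cc] mx] := hC.
elim=> [|k IH] hk; first by exists set0; [exact: maxchain_set0 | rewrite cards0].
have [X XC cX] := IH (ltnW hk).
case: (boolP [exists X' in C, #|X'| == k.+1]).
  by case/existsP => X' /andP [X'C /eqP e]; exists X'.
move=> /negP nex; exfalso; apply: nex.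
pose S := [set W in C | X \proper W].
have TS : setT \in S.
  rewrite inE maxchain_setT //= properT; apply/eqP => e.
  by move: cX hk; rewrite e cardsT => ->; rewrite ltnn.
case: (arg_minnP (fun W : {set T} => #|W|) TS) => Y hY Ymin.
have : Y \in S := hY.
rewrite inE => /andP [YC XY].
have [z [zY zX iZ]] := step _ _ (ci _ XC) (ci _ YC) XY.
set Z := z |: X.
have cZ : #|Z| = k.+1 by rewrite cardsU1 zX cX.
have ZY : Z \subset Y.
  by rewrite subUset sub1set zY; case/properP: XY.
have compZ : forall W, W \in C -> (Z \subset W) || (W \subset Z).
  move=> W WC; case/orP: (cc _ _ XC WC) => [XW | WX]; last first.
    by rewrite (subset_trans WX (subsetUr _ _)) orbT.
  case: (eqVneq X W) => [<- | nXW]; first by rewrite subsetUr orbT.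
  have WS : W \in S by rewrite inE WC properEneq nXW XW.
  have le := Ymin W WS.
  case/orP: (cc _ _ YC WC) => [YW | WY]; first by rewrite (subset_trans ZY YW).
  have : W == Y by rewrite eqEcard WY le.
  by move/eqP => ->; rewrite ZY.
have : Z |: C = C.
  apply: mx; last exact: subsetUr.
  split.
    by move=> W; rewrite in_setU1 => /orP [/eqP -> | /ci //].
  move=> W1 W2; rewrite !in_setU1 => /orP [/eqP -> | W1C] /orP [/eqP -> | W2C].
  - by rewrite subxx.
  - exact: compZ.
  - by rewrite orbC compZ.
  - exact: cc.
move=> e; apply/existsP; exists Z; rewrite -{1}e setU11 /= cZ eqxx //.
Qed.

Lemma maxchain_card (C : {set {set T}}) : is_maximal_chain C -> #|C| = #|{: T}|.+1.
Proof.
move=> hC; have [[ci cc] mx] := hC.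
pose h := fun X : {set T} => (inord #|X| : 'I_(#|{: T}|.+1)).
have hv : forall X : {set T}, val (h X) = #|X|.
  by move=> X; rewrite /h /= inordK // ltnS max_card.
have inj : {in C &, injective h}.
  move=> X Y XC YC e; have : #|X| = #|Y| by rewrite -!hv e.
  move=> ec; case/orP: (cc _ _ XC YC) => s.
    by apply/eqP; rewrite eqEcard s ec leqnn.
  by apply/esym/eqP; rewrite eqEcard s ec leqnn.
rewrite -(card_in_imset inj).
have -> : [set h x | x in C] = setT.
  apply/eqP; rewrite eqEsubset subsetT /=; apply/subsetP => i _.
  have [X XC cX] := maxchain_all _ hC i (ltn_ord i : i <= #|{: T}|).
  by apply/imsetP; exists X => //; apply: val_inj; rewrite /= hv cX.
by rewrite cardsT card_ord.
Qed.

Lemma chain_ext N (C : {set {set T}}) : is_chain C ->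
  #|~: C| <= N -> exists D : {set {set T}}, is_maximal_chain D.
Proof.
elim: N C => [|N IH] C hC hN.
  exists C; split => // D hD CD.
  move: hN; rewrite leqn0 cards_eq0 => /eqP e0.
  have eC : C = setT by rewrite -[C]setCK e0 setC0.
  by apply/eqP; rewrite eqEsubset CD eC subsetT.
case: (classic (forall D, is_chain D -> C \subset D -> D = C)) => H.
  by exists C.
have [D HD] := not_all_ex_not _ _ H.
have hD : is_chain D by apply: NNPP => c; apply: HD => a; case: (c a).
have CD : C \subset D by apply: NNPP => c; apply: HD => _ a; case: (c a).
have nDC : D <> C by move=> e; apply: HD => _ _.
apply: (IH D hD).
have : #|~: D| < #|~: C|.
  apply: proper_card; rewrite properC properEneq CD andbT; apply/eqP => e; exact: nDC (esym e).
move=> lt; rewrite -ltnS; exact: leq_trans lt hN.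
Qed.

End Rank.

Lemma cnt (m k : nat) : \sum_(i < m) ((k <= i) : nat) = m - k.
Proof.
elim: m => [|m IH]; first by rewrite big_ord0.
rewrite big_ord_recr /= IH; case: leqP => h; lia.
Qed.

Lemma card_P m n : #|{: Pelt m n}| = \sum_(k < m) (m - k) * (n - k).
Proof.
rewrite card_sig -sum1_card big_mkcond /=.
rewrite -(pair_bigA _ (fun (ij : 'I_m * 'I_n) (k : 'I_m) => if Pcond (ij, k) then 1 else 0)) /=.
rewrite -(pair_bigA _ (fun (i : 'I_m) (j : 'I_n) => \sum_(k < m) if Pcond ((i, j), k) then 1 else 0)) /=.
under eq_bigr => i _ do rewrite exchange_big /=.
rewrite exchange_big /=.
apply: eq_bigr => k _.
have E : forall b : bool, (if b then 1 else 0) = b by case.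
under eq_bigr => i _ do under eq_bigr => j _ do rewrite /Pcond /= E -mulnb.
under eq_bigr => i _ do rewrite -big_distrl /=.
rewrite -big_distrr /= !cnt mulnC //.
Qed.

Lemma hrec a d : 6 * (\sum_(k < a) (a - k) * (a + d - k)) + a ^ 3 =
   3 * a ^ 2 * (a + d) + 3 * a * (a + d) + a /\
  \sum_(k < a) (a - k) * (a + d - k) = \sum_(k < a + d) (a + d - k) * (a - k).
Proof.
elim: a => [|a [IH1 IH2]].
  split; first by rewrite big_ord0.
  by rewrite big_ord0 add0n big1 // => k _; rewrite sub0n muln0.
have e1 : \sum_(k < a.+1) (a.+1 - k) * (a.+1 + d - k) =
          a.+1 * (a.+1 + d) + \sum_(k < a) (a - k) * (a + d - k).
  by rewrite big_ord_recl /= subn0 subn0; congr (_ + _); apply: eq_bigr => k _; rewrite /bump /=; congr (_ * _); lia.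
have e2 : \sum_(k < a.+1 + d) (a.+1 + d - k) * (a.+1 - k) =
          (a.+1 + d) * a.+1 + \sum_(k < a + d) (a + d - k) * (a - k).
  by rewrite addSn big_ord_recl /= subn0 subn0 -addSn; congr (_ + _); apply: eq_bigr => k _; rewrite /bump /=; congr (_ * _); lia.
rewrite e1 e2 -IH2; split; last by rewrite mulnC.
move: IH1; set s := \sum_(k < a) _ => IH1.
nia.
Qed.

Theorem corollary3p18 (m n : nat) (hm : 0 < m) (hn : 0 < n) :
  let a := minn m n in
  let b := maxn m n in
  (* P_{m,n} is a poset: the generated relation is antisymmetric *)
  (forall x y : Pelt m n, Ple x y -> Ple y x -> x = y) /\
  (* J(P_{m,n}) is a lattice under inclusion, with meet/join = intersection/union *)
  (forall X Y : {set Pelt m n}, is_ideal X -> is_ideal Y ->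
     is_ideal (X :|: Y) /\ is_ideal (X :&: Y)) /\
  (* ... which is distributive *)
  (forall X Y Z : {set Pelt m n}, is_ideal X -> is_ideal Y -> is_ideal Z ->
     X :&: (Y :|: Z) = (X :&: Y) :|: (X :&: Z)) /\
  (* it is graded of rank r := (-a^3 + 3a^2 b + 3ab + a)/6: maximal chains exist
     and every maximal chain has exactly r+1 elements *)
  exists r : nat,
    6 * r + a ^ 3 = 3 * a ^ 2 * b + 3 * a * b + a /\
    (exists C : {set {set Pelt m n}}, is_maximal_chain C) /\
    (forall C : {set {set Pelt m n}}, is_maximal_chain C -> #|C| = r.+1).
Proof.
move=> a b.
split; first exact: Ple_anti.
split.
  move=> X Y iX iY; split => y z.
    rewrite !in_setU => /orP [h|h] hz.
      by rewrite (iX _ _ h hz).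
    by rewrite (iY _ _ h hz) orbT.
  by rewrite !in_setI => /andP [h1 h2] hz; rewrite (iX _ _ h1 hz) (iY _ _ h2 hz).
split; first by move=> X Y Z _ _ _; rewrite setIUr.
exists #|{: Pelt m n}|; split.
  rewrite card_P /a /b; case: (leqP m n) => h.
    by have [H _] := hrec m (n - m); rewrite subnKC // in H.
  have [H1 H2] := hrec n (m - n); rewrite subnKC ?(ltnW h) // in H1 H2.
  by rewrite -H2.
split; last exact: maxchain_card.
apply: (@chain_ext m n #|~: (set0 : {set {set Pelt m n}})| set0) => //.
by split => [X | X Y]; rewrite in_set0.
Qed.
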